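(* In the four-direction cube setting with the random model described in the context, let $k\ge0$, let $R_b=\{r\in R:X_r=0\}$, and let $C_b=\mathcal N(R_b)\setminus\mathcal N(R\setminus R_b)$ (equivalently, the set of cells none of whose four rays is a zero measurement). For integers $a$ write $\rho_a:=d-|a|$, and define \[ F(a_1,a_2)=\Big(1-\tfrac{\rho_{a_1}+\rho_{a_2}-1}{d^3}\Big)^k,\quad F(a_1,a_2,a_3)=\Big(1-\tfrac{\rho_{a_1}+\rho_{a_2}+\rho_{a_3}-2}{d^3}\Big)^k, \] \[ F(a_1,a_2,a_3,a_4)=\Big(1-\tfrac{\rho_{a_1}+\rho_{a_2}+\rho_{a_3}+\rho_{a_4}-3}{d^3}\Big)^k. \] Then \[ N_C(k):=\mathbb{E}[|C_b|]=d^3-N_C^1+N_C^2-N_C^3+N_C^4, \] where \[ N_C^1=4d\Big(d\big(1-\tfrac1{d^2}\big)^k+2\sum_{s=1}^{d-1}s\big(1-\tfrac{s}{d^3}\big)^k\Big), \] \[ N_C^2=2d\sum_{i,l\in[d]}F(l+i-1-d,\,i-l)+4\sum_{i,j,l\in[d]}F(l-i,\,l-j), \] \[ N_C^3=2\sum_{i,j,l\in[d]}\Big(F(l+i-1-d,\,l-i,\,l-j)+F(l-i,\,l-j,\,l+j-1-d)\Big), \] \[ N_C^4=\sum_{i,j,l\in[d]}F(l+i-1-d,\,l-i,\,l+j-1-d,\,l-j). \]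
   Context: Cube setting. Let $d\ge2$ be an integer and $[d]=\{1,\dots,d\}$. The cells are $C=\{(i,j,l): i,j,l\in[d]\}$ (voxels of $[0,d]^3$), $|C|=d^3$. There are four families of rays (projection directions with normals proportional to $(-1,0,1),(1,0,1),(0,-1,1),(0,1,1)$), each ray identified with the set of cells it meets: for $s\in\{1-d,\dots,d-1\}$ and $t\in[d]$, $r^1_{s,t}=\{(i,j,l)\in C: i+l-1-d=s,\ j=t\}$ and $r^2_{s,t}=\{(i,j,l)\in C: i-l=s,\ j=t\}$; for $s\in[d]$ and $t\in\{1-d,\dots,d-1\}$, $r^3_{s,t}=\{(i,j,l)\in C: i=s,\ j+l-1-d=t\}$ and $r^4_{s,t}=\{(i,j,l)\in C: i=s,\ j-l=t\}$. $R_a$ is the family of rays $r^a_{\cdot,\cdot}$, $R=R_1\cup R_2\cup R_3\cup R_4$, $|R|=4d(2d-1)$; $|r|$ is the number of cells of ray $r$ (so $|r^{1}_{s,t}|=|r^2_{s,t}|=d-|s|$ and $|r^3_{s,t}|=|r^4_{s,t}|=d-|t|$). Each cell lies on exactly one ray of each family. Random model: $k$ cells are drawn independently and uniformly from $C$ (with replacement). For $r\in R$, $X_r\in\{0,1\}$ equals $1$ (a ''zero measurement'') iff none of the drawn cells lies on $r$. For a set $S$ of rays, $\mathcal N(S)$ is the set of cells lying on at least one ray of $S$. *)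

(* Defs.v *)
From HB Require Import structures.
From mathcomp Require Import all_boot all_order all_algebra.
Set Implicit Arguments. Unset Strict Implicit. Unset Printing Implicit Defensive.
Import Order.TTheory GRing.Theory Num.Theory.
Local Open Scope ring_scope.

(* Cells (i,j,l) in [d]^3, stored 0-based as ordinals; coordinate value = val + 1. *)
Definition cell (d : nat) : finType := ('I_d * 'I_d * 'I_d)%type.
Definition ci d (c : cell d) : int := ((c.1.1 : nat).+1)%:Z.
Definition cj d (c : cell d) : int := ((c.1.2 : nat).+1)%:Z.
Definition cl d (c : cell d) : int := ((c.2 : nat).+1)%:Z.

Definition ray1 d (s t : int) : {set cell d} :=
  [set c | (ci c + cl c - 1 - d%:Z == s) && (cj c == t)].
Definition ray2 d (s t : int) : {set cell d} :=
  [set c | (ci c - cl c == s) && (cj c == t)].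
Definition ray3 d (s t : int) : {set cell d} :=
  [set c | (ci c == s) && (cj c + cl c - 1 - d%:Z == t)].
Definition ray4 d (s t : int) : {set cell d} :=
  [set c | (ci c == s) && (cj c - cl c == t)].

(* Index ranges: o : 'I_(2d-1) encodes s = o - (d-1) in {1-d,...,d-1};
   p : 'I_d encodes t = p + 1 in [d]. *)
Definition offs d (o : nat) : int := o%:Z - (d%:Z - 1).
Definition pos1 (p : nat) : int := (p.+1)%:Z.

Definition R1 d : {set {set cell d}} :=
  [set ray1 d (offs d o) (pos1 p) | o : 'I_(2 * d - 1), p : 'I_d].
Definition R2 d : {set {set cell d}} :=
  [set ray2 d (offs d o) (pos1 p) | o : 'I_(2 * d - 1), p : 'I_d].
Definition R3 d : {set {set cell d}} :=
  [set ray3 d (pos1 p) (offs d o) | p : 'I_d, o : 'I_(2 * d - 1)].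
Definition R4 d : {set {set cell d}} :=
  [set ray4 d (pos1 p) (offs d o) | p : 'I_d, o : 'I_(2 * d - 1)].
Definition Rall d : {set {set cell d}} := R1 d :|: R2 d :|: R3 d :|: R4 d.

(* A draw of k cells (with replacement). X_r = 1 iff no drawn cell lies on r. *)
Definition Xr d k (w : {ffun 'I_k -> cell d}) (r : {set cell d}) : bool :=
  [forall m, w m \notin r].
Definition Rb d k (w : {ffun 'I_k -> cell d}) : {set {set cell d}} :=
  [set r in Rall d | ~~ Xr w r].
Definition Nbhd d (S : {set {set cell d}}) : {set cell d} := \bigcup_(r in S) r.
Definition Cb d k (w : {ffun 'I_k -> cell d}) : {set cell d} :=
  Nbhd (Rb w) :\: Nbhd (Rall d :\: Rb w).

Definition NC (d k : nat) : rat :=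
  (\sum_(w : {ffun 'I_k -> cell d}) (#|Cb w|)%:R) / (#|{ffun 'I_k -> cell d}|)%:R.

Definition rho (d : nat) (a : int) : rat := (d%:Z - `|a|%:Z)%:~R.
Definition F2 (d k : nat) (a1 a2 : int) : rat :=
  (1 - (rho d a1 + rho d a2 - 1) / (d ^ 3)%:R) ^+ k.
Definition F3 (d k : nat) (a1 a2 a3 : int) : rat :=
  (1 - (rho d a1 + rho d a2 + rho d a3 - 2) / (d ^ 3)%:R) ^+ k.
Definition F4 (d k : nat) (a1 a2 a3 a4 : int) : rat :=
  (1 - (rho d a1 + rho d a2 + rho d a3 + rho d a4 - 3) / (d ^ 3)%:R) ^+ k.

Definition NC1 (d k : nat) : rat :=
  4 * d%:R * (d%:R * (1 - 1 / (d ^ 2)%:R) ^+ k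
     + 2 * \sum_(1 <= s < d) s%:R * (1 - s%:R / (d ^ 3)%:R) ^+ k).

(* sums over i,j,l in [d]: i = (val) + 1 *)
Definition NC2 (d k : nat) : rat :=
  2 * d%:R * (\sum_(i < d) \sum_(l < d)
      F2 d k (pos1 l + pos1 i - 1 - d%:Z) (pos1 i - pos1 l))
  + 4 * (\sum_(i < d) \sum_(j < d) \sum_(l < d)
      F2 d k (pos1 l - pos1 i) (pos1 l - pos1 j)).

Definition NC3 (d k : nat) : rat :=
  2 * (\sum_(i < d) \sum_(j < d) \sum_(l < d)
     (F3 d k (pos1 l + pos1 i - 1 - d%:Z) (pos1 l - pos1 i) (pos1 l - pos1 j)
      + F3 d k (pos1 l - pos1 i) (pos1 l - pos1 j) (pos1 l + pos1 j - 1 - d%:Z))).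

Definition NC4 (d k : nat) : rat :=
  \sum_(i < d) \sum_(j < d) \sum_(l < d)
     F4 d k (pos1 l + pos1 i - 1 - d%:Z) (pos1 l - pos1 i)
            (pos1 l + pos1 j - 1 - d%:Z) (pos1 l - pos1 j).

(* Main.v *)
Require Import Defs.
From HB Require Import structures.
From mathcomp Require Import all_boot all_order all_algebra zify ring lra.
Import Order.TTheory GRing.Theory Num.Theory.
Set Implicit Arguments. Unset Strict Implicit. Unset Printing Implicit Defensive.
Local Open Scope ring_scope.

Definition a1 d (c : cell d) : int := ci c + cl c - 1 - d%:Z.
Definition a2 d (c : cell d) : int := ci c - cl c.
Definition a3 d (c : cell d) : int := cj c + cl c - 1 - d%:Z.
Definition a4 d (c : cell d) : int := cj c - cl c.
Definition A1 d (c : cell d) := ray1 d (a1 c) (cj c).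
Definition A2 d (c : cell d) := ray2 d (a2 c) (cj c).
Definition A3 d (c : cell d) := ray3 d (ci c) (a3 c).
Definition A4 d (c : cell d) := ray4 d (ci c) (a4 c).

Lemma A1_in d (c : cell d) : A1 c \in Rall d.
Proof.
case: c => [[x y] z].
have h : (x + z < 2 * d - 1)%N by have := ltn_ord x; have := ltn_ord z; lia.
have -> : A1 ((x, y), z) = ray1 d (offs d (Ordinal h)) (pos1 y).
  rewrite /A1; congr ray1; rewrite /a1 /offs /ci /cl /=; lia.
by rewrite /Rall !inE; apply/orP; left; apply/orP; left; apply/orP; left;
  apply: imset2_f.
Qed.

Lemma A2_in d (c : cell d) : A2 c \in Rall d.
Proof.
case: c => [[x y] z].
have h : (x + (d.-1 - z) < 2 * d - 1)%N by have := ltn_ord x; have := ltn_ord z; lia.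
have -> : A2 ((x, y), z) = ray2 d (offs d (Ordinal h)) (pos1 y).
  rewrite /A2; congr ray2; rewrite /a2 /offs /ci /cl /=; have := ltn_ord z; lia.
by rewrite /Rall !inE; apply/orP; left; apply/orP; left; apply/orP; right;
  apply: imset2_f.
Qed.

Lemma A3_in d (c : cell d) : A3 c \in Rall d.
Proof.
case: c => [[x y] z].
have h : (y + z < 2 * d - 1)%N by have := ltn_ord y; have := ltn_ord z; lia.
have -> : A3 ((x, y), z) = ray3 d (pos1 x) (offs d (Ordinal h)).
  rewrite /A3; congr ray3; rewrite /a3 /offs /cj /cl /=; lia.
by rewrite /Rall !inE; apply/orP; left; apply/orP; right;
  apply: imset2_f.
Qed.

Lemma A4_in d (c : cell d) : A4 c \in Rall d.
Proof.
case: c => [[x y] z].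
have h : (y + (d.-1 - z) < 2 * d - 1)%N by have := ltn_ord y; have := ltn_ord z; lia.
have -> : A4 ((x, y), z) = ray4 d (pos1 x) (offs d (Ordinal h)).
  rewrite /A4; congr ray4; rewrite /a4 /offs /cj /cl /=; have := ltn_ord z; lia.
by rewrite /Rall !inE; apply/orP; right; apply: imset2_f.
Qed.

Lemma Rall_cases d (r : {set cell d}) (c : cell d) : r \in Rall d -> c \in r ->
  [\/ r = A1 c, r = A2 c, r = A3 c | r = A4 c].
Proof.
rewrite /Rall !inE => /orP[/orP[/orP[]|]|].
- case/imset2P => o p _ _ -> ; rewrite inE => /andP[/eqP h1 /eqP h2].
  by apply: Or41; rewrite /A1 /a1 h1 h2.
- case/imset2P => o p _ _ -> ; rewrite inE => /andP[/eqP h1 /eqP h2].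
  by apply: Or42; rewrite /A2 /a2 h1 h2.
- case/imset2P => p o _ _ -> ; rewrite inE => /andP[/eqP h1 /eqP h2].
  by apply: Or43; rewrite /A3 /a3 h1 h2.
- case/imset2P => p o _ _ -> ; rewrite inE => /andP[/eqP h1 /eqP h2].
  by apply: Or44; rewrite /A4 /a4 h1 h2.
Qed.

Lemma inCb d k (w : {ffun 'I_k -> cell d}) (c : cell d) :
  (c \in Cb w) = [&& ~~ Xr w (A1 c), ~~ Xr w (A2 c), ~~ Xr w (A3 c) & ~~ Xr w (A4 c)].
Proof.
have inRb r : r \in Rall d -> (r \in Rb w) = ~~ Xr w r.
  by move=> hr; rewrite /Rb inE hr.
have cA1 : c \in A1 c by rewrite inE !eqxx.
have cA2 : c \in A2 c by rewrite inE !eqxx.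
have cA3 : c \in A3 c by rewrite inE !eqxx.
have cA4 : c \in A4 c by rewrite inE !eqxx.
rewrite /Cb /Nbhd inE; apply/idP/idP.
- case/andP => hn _.
  have h r : r \in Rall d -> c \in r -> r \in Rb w.
    move=> hr hc; apply/negPn/negP => hb; apply: (negP hn); apply/bigcupP; exists r => //.
    by rewrite inE hb hr.
  by rewrite -!inRb ?A1_in ?A2_in ?A3_in ?A4_in // !h ?A1_in ?A2_in ?A3_in ?A4_in.
- case/and4P => h1 h2 h3 h4; apply/andP; split; last first.
    by apply/bigcupP; exists (A1 c) => //; rewrite inRb ?A1_in.
  apply/negP => /bigcupP [r]; rewrite inE => /andP[hnb hr] hc.
  move: hnb; case: (Rall_cases hr hc) => e; rewrite e inRb ?A1_in ?A2_in ?A3_in ?A4_in // => /negPn hx.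
  by move: h1; rewrite hx. by move: h2; rewrite hx. by move: h3; rewrite hx. by move: h4; rewrite hx.
Qed.
Lemma big_cell d R (idx : R) (op : Monoid.com_law idx) (F : cell d -> R) :
  \big[op/idx]_(c : cell d) F c = \big[op/idx]_(x < d) \big[op/idx]_(y < d) \big[op/idx]_(z < d) F ((x, y), z).
Proof.
rewrite pair_bigA pair_bigA; apply: eq_bigr => -[[x y] z] _ //.
Qed.

Lemma card_cell d (A : {set cell d}) :
  #|A| = (\sum_(x < d) \sum_(y < d) \sum_(z < d) nat_of_bool (((x, y), z) \in A))%N.
Proof.
rewrite -sum1_card big_mkcond /= big_cell; apply: eq_bigr => x _; apply: eq_bigr => y _; apply: eq_bigr => z _.
by case: (_ \in _).
Qed.

Lemma cnt1 d (b : int) : (\sum_(x < d) nat_of_bool ((x : nat)%:Z == b))%N = nat_of_bool ((0 <= b) && (b < d%:Z)).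
Proof.
elim: d => [|d IH]; first by rewrite big_ord0; lia.
rewrite big_ord_recr /= IH; lia.
Qed.

Lemma cntD d (a : int) :
  (\sum_(x < d) \sum_(z < d) nat_of_bool (((x : nat)%:Z - (z : nat)%:Z)%R == a))%N = (d - `|a|)%N.
Proof.
elim: d => [|d IH]; first by rewrite big_ord0.
rewrite big_ord_recr /= big_ord_recr /=.
rewrite (eq_bigr (fun x : 'I_d => \sum_(z < d) nat_of_bool (((x : nat)%:Z - (z : nat)%:Z)%R == a) + nat_of_bool ((x:nat)%:Z == (a + d%:Z)%R))%N); last first.
  by move=> x _; rewrite big_ord_recr /=; congr (_ + _)%N; apply/eqP; case: eqP; lia.
rewrite big_split /= IH cnt1.
rewrite (eq_bigr (fun z : 'I_d => nat_of_bool ((z : nat)%:Z == (d%:Z - a)%R))); last first.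
  by move=> z _; apply/eqP; case: eqP; case: eqP; lia.
rewrite cnt1; lia.
Qed.

Lemma sum_y d (y0 : 'I_d) (b : bool) :
  (\sum_(y < d) nat_of_bool (b && ((y : nat) == y0)))%N = b.
Proof.
rewrite (bigD1 y0) //= eqxx andbT big1 ?addn0 // => y hy.
by rewrite (_ : (y : nat) == y0 = false) ?andbF //; apply/negbTE.
Qed.

Lemma card_ray2 d s (y0 : 'I_d) : #|ray2 d s (pos1 y0)| = (d - `|s|)%N.
Proof.
rewrite card_cell -(cntD d s); apply: eq_bigr => x _; rewrite exchange_big /=; apply: eq_bigr => z _.
rewrite -(sum_y y0); apply: eq_bigr => y _.
rewrite inE /ci /cj /cl /pos1 /=; lia.
Qed.

Lemma card_ray4 d s (x0 : 'I_d) : #|ray4 d (pos1 x0) s| = (d - `|s|)%N.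
Proof.
rewrite card_cell -(cntD d s) exchange_big /=; apply: eq_bigr => y _.
rewrite exchange_big /=; apply: eq_bigr => z _.
rewrite -(sum_y x0); apply: eq_bigr => x _.
rewrite inE /ci /cj /cl /pos1 /=; lia.
Qed.

Lemma card_ray1 d s (y0 : 'I_d) : #|ray1 d s (pos1 y0)| = (d - `|s|)%N.
Proof.
rewrite card_cell -(cntD d s); apply: eq_bigr => x _; rewrite exchange_big /=.
rewrite (reindex_inj rev_ord_inj) /=; apply: eq_bigr => z _.
rewrite -(sum_y y0); apply: eq_bigr => y _.
rewrite inE /ci /cj /cl /pos1 /=; have := ltn_ord z; lia.
Qed.

Lemma card_ray3 d s (x0 : 'I_d) : #|ray3 d (pos1 x0) s| = (d - `|s|)%N.
Proof.
rewrite card_cell -(cntD d s) exchange_big /=; apply: eq_bigr => y _.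
rewrite exchange_big /= (reindex_inj rev_ord_inj) /=; apply: eq_bigr => z _.
rewrite -(sum_y x0); apply: eq_bigr => x _.
rewrite inE /ci /cj /cl /pos1 /=; have := ltn_ord z; lia.
Qed.

Ltac inter_tac := 
  let x' := fresh "x'" in let y' := fresh "y'" in let z' := fresh "z'" in
  apply/setP => -[[x' y'] z']; rewrite !inE /a1 /a2 /a3 /a4 /ci /cj /cl /=; apply/idP/eqP;
  [ move=> /andP[/andP[/eqP ? /eqP ?] /andP[/eqP ? /eqP ?]];
    congr ((_, _), _); apply/val_inj => /=; lia
  | by case=> -> -> ->; rewrite !eqxx ].

Lemma I12 d (c : cell d) : A1 c :&: A2 c = [set c].
Proof. case: c => [[x y] z]; inter_tac. Qed.
Lemma I13 d (c : cell d) : A1 c :&: A3 c = [set c].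
Proof. case: c => [[x y] z]; inter_tac. Qed.
Lemma I14 d (c : cell d) : A1 c :&: A4 c = [set c].
Proof. case: c => [[x y] z]; inter_tac. Qed.
Lemma I23 d (c : cell d) : A2 c :&: A3 c = [set c].
Proof. case: c => [[x y] z]; inter_tac. Qed.
Lemma I24 d (c : cell d) : A2 c :&: A4 c = [set c].
Proof. case: c => [[x y] z]; inter_tac. Qed.
Lemma I34 d (c : cell d) : A3 c :&: A4 c = [set c].
Proof. case: c => [[x y] z]; inter_tac. Qed.

Lemma rho_nat d (a : int) : (`|a| <= d)%N -> rho d a = ((d - `|a|)%N)%:R.
Proof. by move=> h; rewrite /rho subzn. Qed.

Lemma rhoN d (a : int) : rho d (- a) = rho d a.
Proof. by rewrite /rho abszN. Qed.

Lemma cardA1 d (c : cell d) : #|A1 c|%:R = rho d (a1 c) :> rat.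
Proof.
rewrite /A1 (card_ray1 _ c.1.2) rho_nat //.
case: c => [[x y] z]; rewrite /a1 /ci /cl /=; have := ltn_ord x; have := ltn_ord z; lia.
Qed.
Lemma cardA2 d (c : cell d) : #|A2 c|%:R = rho d (a2 c) :> rat.
Proof.
rewrite /A2 (card_ray2 _ c.1.2) rho_nat //.
case: c => [[x y] z]; rewrite /a2 /ci /cl /=; have := ltn_ord x; have := ltn_ord z; lia.
Qed.
Lemma cardA3 d (c : cell d) : #|A3 c|%:R = rho d (a3 c) :> rat.
Proof.
rewrite /A3 (card_ray3 _ c.1.1) rho_nat //.
case: c => [[x y] z]; rewrite /a3 /cj /cl /=; have := ltn_ord y; have := ltn_ord z; lia.
Qed.
Lemma cardA4 d (c : cell d) : #|A4 c|%:R = rho d (a4 c) :> rat.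
Proof.
rewrite /A4 (card_ray4 _ c.1.1) rho_nat //.
case: c => [[x y] z]; rewrite /a4 /cj /cl /=; have := ltn_ord y; have := ltn_ord z; lia.
Qed.

Lemma cardU2 (T : finType) (A B : {set T}) c : A :&: B = [set c] ->
  (#|A :|: B|%:R : rat) = #|A|%:R + #|B|%:R - 1.
Proof.
move=> h; have := cardsUI A B; rewrite h cards1 => /(congr1 (fun n => n%:R : rat)).
rewrite !natrD => e; lra.
Qed.

Lemma cardU3 (T : finType) (A B C : {set T}) c : A :&: B = [set c] ->
  A :&: C = [set c] -> B :&: C = [set c] ->
  (#|A :|: B :|: C|%:R : rat) = #|A|%:R + #|B|%:R + #|C|%:R - 2.
Proof.
move=> h1 h2 h3; rewrite (@cardU2 _ _ _ c) ?(cardU2 h1) ?setIUl ?h2 ?h3 ?setUid //; lra.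
Qed.

Lemma cardU4 (T : finType) (A B C D : {set T}) c : A :&: B = [set c] ->
  A :&: C = [set c] -> A :&: D = [set c] -> B :&: C = [set c] -> B :&: D = [set c] -> C :&: D = [set c] ->
  (#|A :|: B :|: C :|: D|%:R : rat) = #|A|%:R + #|B|%:R + #|C|%:R + #|D|%:R - 3.
Proof.
move=> h1 h2 h3 h4 h5 h6; rewrite (@cardU2 _ _ _ c) ?(cardU3 h1 h2 h4) ?setIUl ?h3 ?h5 ?h6 ?setUid //; lra.
Qed.

Definition ind (b : bool) : rat := if b then 1 else 0.

Lemma XrU d k (w : {ffun 'I_k -> cell d}) A B : Xr w (A :|: B) = Xr w A && Xr w B.
Proof.
apply/forallP/andP => [h|[/forallP h1 /forallP h2] m]; last by rewrite inE negb_or h1 h2.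
by split; apply/forallP => m; have := h m; rewrite inE negb_or => /andP[].
Qed.

Lemma sum_ind (T : finType) (S : pred T) : \sum_(x : T) ind (x \in S) = #|S|%:R.
Proof.
rewrite -sum1_card natr_sum [RHS]big_mkcond /=; apply: eq_bigr => x _; rewrite /ind; by case: (x \in S).
Qed.

Lemma card_cellT d : #|cell d| = (d ^ 3)%N.
Proof. by rewrite /cell !card_prod !card_ord; rewrite !expnS expn0 muln1 mulnA. Qed.

Lemma sum_Xr d k (B : {set cell d}) : (0 < d)%N ->
  \sum_(w : {ffun 'I_k -> cell d}) ind (Xr w B) = ((d^3)%:R : rat) ^+ k * (1 - #|B|%:R / (d^3)%:R) ^+ k.
Proof.
move=> hd.
rewrite (eq_bigr (fun w => ind (w \in ffun_on (~: B)))); last first.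
  move=> w _; congr ind; apply/forallP/ffun_onP => h m; have := h m; by rewrite inE.
rewrite sum_ind card_ffun_on card_ord natrX -exprMn; congr (_ ^+ _).
have hN : ((d ^ 3)%:R : rat) != 0 by rewrite pnatr_eq0 expn_eq0 negb_and -lt0n hd.
have := cardsC B; rewrite card_cellT => e.
have eN : (#|~: B|%:R : rat) = (d ^ 3)%:R - #|B|%:R by rewrite -e natrD; ring.
rewrite eN; field; by rewrite pnatr_eq0 -lt0n.
Qed.

Definition Gf d k (a : int) : rat := (1 - rho d a / (d ^ 3)%:R) ^+ k.
Definition Tc d k (c : cell d) : rat :=
  1 - (Gf d k (a1 c) + Gf d k (a2 c) + Gf d k (a3 c) + Gf d k (a4 c))
  + (F2 d k (a1 c) (a2 c) + F2 d k (a1 c) (a3 c) + F2 d k (a1 c) (a4 c)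
     + F2 d k (a2 c) (a3 c) + F2 d k (a2 c) (a4 c) + F2 d k (a3 c) (a4 c))
  - (F3 d k (a1 c) (a2 c) (a3 c) + F3 d k (a1 c) (a2 c) (a4 c)
     + F3 d k (a1 c) (a3 c) (a4 c) + F3 d k (a2 c) (a3 c) (a4 c))
  + F4 d k (a1 c) (a2 c) (a3 c) (a4 c).

Lemma ind_Cb d k (w : {ffun 'I_k -> cell d}) (c : cell d) :
  ind (c \in Cb w) = ind (Xr w set0)
    - (ind (Xr w (A1 c)) + ind (Xr w (A2 c)) + ind (Xr w (A3 c)) + ind (Xr w (A4 c)))
    + (ind (Xr w (A1 c :|: A2 c)) + ind (Xr w (A1 c :|: A3 c)) + ind (Xr w (A1 c :|: A4 c))
       + ind (Xr w (A2 c :|: A3 c)) + ind (Xr w (A2 c :|: A4 c)) + ind (Xr w (A3 c :|: A4 c)))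
    - (ind (Xr w (A1 c :|: A2 c :|: A3 c)) + ind (Xr w (A1 c :|: A2 c :|: A4 c))
       + ind (Xr w (A1 c :|: A3 c :|: A4 c)) + ind (Xr w (A2 c :|: A3 c :|: A4 c)))
    + ind (Xr w (A1 c :|: A2 c :|: A3 c :|: A4 c)).
Proof.
have -> : Xr w set0 = true by apply/forallP => m; rewrite inE.
rewrite inCb !XrU.
case: (Xr w (A1 c)); case: (Xr w (A2 c)); case: (Xr w (A3 c)); case: (Xr w (A4 c));
  rewrite /ind /=; ring.
Qed.

Lemma sum_Cb d k (c : cell d) : (0 < d)%N ->
  \sum_(w : {ffun 'I_k -> cell d}) ind (c \in Cb w) = ((d^3)%:R : rat) ^+ k * @Tc d k c.
Proof.
move=> hd.
rewrite (eq_bigr _ (fun w _ => ind_Cb w c)).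
rewrite !(big_split, sumrN) /= !sum_Xr //.
rewrite (cardU4 (I12 c) (I13 c) (I14 c) (I23 c) (I24 c) (I34 c)).
rewrite (cardU3 (I12 c) (I13 c) (I23 c)) (cardU3 (I12 c) (I14 c) (I24 c)).
rewrite (cardU3 (I13 c) (I14 c) (I34 c)) (cardU3 (I23 c) (I24 c) (I34 c)).
rewrite (cardU2 (I12 c)) (cardU2 (I13 c)) (cardU2 (I14 c)) (cardU2 (I23 c)) (cardU2 (I24 c)) (cardU2 (I34 c)).
rewrite !cardA1 !cardA2 !cardA3 !cardA4 cards0 mul0r subr0 expr1n.
rewrite /Tc /Gf /F2 /F3 /F4; ring.
Qed.

Lemma NC_T d k : (0 < d)%N -> NC d k = \sum_(c : cell d) @Tc d k c.
Proof.
move=> hd; rewrite /NC.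
rewrite (eq_bigr (fun w => \sum_(c : cell d) ind (c \in Cb w))); last first.
  by move=> w _; rewrite sum_ind.
rewrite exchange_big /= (eq_bigr _ (fun c _ => sum_Cb k c hd)).
rewrite card_ffun card_ord card_cellT !natrX -mulr_sumr mulrAC divff ?mul1r //.
by rewrite !expf_neq0 // pnatr_eq0 -lt0n.
Qed.
Lemma sumE n (h : nat -> rat) : \sum_(x < n) h (n - x)%N = \sum_(1 <= s < n.+1) h s.
Proof.
elim: n => [|n IH]; first by rewrite big_ord0 big_geq.
rewrite big_ord_recl /= subn0 big_nat_recr //= addrC; congr (_ + _).
by rewrite -IH; apply: eq_bigr => x _ /=; rewrite /bump /= add1n subSS.
Qed.

Lemma absSum n (h : nat -> rat) :
  \sum_(x < n) \sum_(z < n) h `|(x : nat)%:Z - (z : nat)%:Z|%N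
  = n%:R * h 0%N + 2 * \sum_(1 <= s < n) (n - s)%:R * h s.
Proof.
elim: n => [|n IH]; first by rewrite big_ord0 big_geq // mul0r mulr0 addr0.
rewrite big_ord_recr /=.
rewrite (eq_bigr (fun x : 'I_n => \sum_(z < n) h `|(x : nat)%:Z - (z : nat)%:Z|%N + h (n - x)%N)); last first.
  move=> x _; rewrite big_ord_recr /=; congr (_ + h _); have := ltn_ord x; lia.
rewrite big_split /= IH sumE big_ord_recr /=.
rewrite (eq_bigr (fun z : 'I_n => h (n - z)%N)); last first.
  move=> z _; congr h; have := ltn_ord z; lia.
rewrite sumE.
have e1 : \sum_(1 <= s < n.+1) (n - s)%:R * h s = \sum_(1 <= s < n) (n - s)%:R * h s.
  case: n {IH} => [|n]; first by rewrite !big_geq.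
  by rewrite big_nat_recr //= subnn mul0r addr0.
have e2 : \sum_(1 <= s < n.+1) (n.+1 - s)%:R * h s
    = \sum_(1 <= s < n.+1) (n - s)%:R * h s + \sum_(1 <= s < n.+1) h s.
  rewrite -big_split /=; apply: eq_big_nat => s hs.
  rewrite subSn; [by rewrite -addn1 natrD; ring | lia].
rewrite e2 e1 (_ : `|(n : nat)%:Z - (n : nat)%:Z|%N = 0%N); last by lia.
rewrite -addn1 natrD; ring.
Qed.

Definition S3 d (f : 'I_d -> 'I_d -> 'I_d -> rat) :=
  \sum_(x < d) \sum_(y < d) \sum_(z < d) f x y z.

Lemma eq_S3 d (f g : 'I_d -> 'I_d -> 'I_d -> rat) :
  (forall x y z, f x y z = g x y z) -> S3 f = S3 g.
Proof.
move=> h; rewrite /S3; apply: eq_bigr => x _; apply: eq_bigr => y _; apply: eq_bigr => z _; exact: h.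
Qed.

Lemma S3D d (f g : 'I_d -> 'I_d -> 'I_d -> rat) :
  S3 (fun x y z => f x y z + g x y z) = S3 f + S3 g.
Proof.
rewrite /S3 -big_split; apply: eq_bigr => x _; rewrite -big_split; apply: eq_bigr => y _.
by rewrite -big_split.
Qed.

Lemma S3N d (f : 'I_d -> 'I_d -> 'I_d -> rat) :
  S3 (fun x y z => - f x y z) = - S3 f.
Proof.
rewrite /S3 -sumrN; apply: eq_bigr => x _; rewrite -sumrN; apply: eq_bigr => y _.
by rewrite -sumrN.
Qed.

Lemma S3M d (c : rat) (f : 'I_d -> 'I_d -> 'I_d -> rat) :
  S3 (fun x y z => c * f x y z) = c * S3 f.
Proof.
rewrite /S3 mulr_sumr; apply: eq_bigr => x _; rewrite mulr_sumr; apply: eq_bigr => y _.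
by rewrite mulr_sumr.
Qed.

Lemma S3_revx d (f : 'I_d -> 'I_d -> 'I_d -> rat) :
  S3 f = S3 (fun x y z => f (rev_ord x) y z).
Proof. by rewrite /S3 (reindex_inj rev_ord_inj). Qed.

Lemma S3_revy d (f : 'I_d -> 'I_d -> 'I_d -> rat) :
  S3 f = S3 (fun x y z => f x (rev_ord y) z).
Proof. by rewrite /S3; apply: eq_bigr => x _; rewrite (reindex_inj rev_ord_inj). Qed.

Lemma S3_revz d (f : 'I_d -> 'I_d -> 'I_d -> rat) :
  S3 f = S3 (fun x y z => f x y (rev_ord z)).
Proof.
by rewrite /S3; apply: eq_bigr => x _; apply: eq_bigr => y _; rewrite (reindex_inj rev_ord_inj).
Qed.

Lemma S3_noy d (g : 'I_d -> 'I_d -> rat) :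
  S3 (fun x y z => g x z) = d%:R * \sum_(x < d) \sum_(z < d) g x z.
Proof.
rewrite /S3 mulr_sumr; apply: eq_bigr => x _.
by rewrite sumr_const card_ord mulr_natl.
Qed.

Lemma S3_nox d (g : 'I_d -> 'I_d -> rat) :
  S3 (fun x y z => g y z) = d%:R * \sum_(y < d) \sum_(z < d) g y z.
Proof. by rewrite /S3 sumr_const card_ord mulr_natl. Qed.

Lemma Gf_abs d k a b : `|a|%N = `|b|%N -> Gf d k a = Gf d k b.
Proof. by rewrite /Gf /rho => ->. Qed.
Lemma F2_abs d k a b a' b' : `|a|%N = `|a'|%N -> `|b|%N = `|b'|%N -> F2 d k a b = F2 d k a' b'.
Proof. by rewrite /F2 /rho => -> ->. Qed.
Lemma F3_abs d k a b c a' b' c' : `|a|%N = `|a'|%N -> `|b|%N = `|b'|%N -> `|c|%N = `|c'|%N ->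
  F3 d k a b c = F3 d k a' b' c'.
Proof. by rewrite /F3 /rho => -> -> ->. Qed.
Lemma F4_abs d k a b c e a' b' c' e' : `|a|%N = `|a'|%N -> `|b|%N = `|b'|%N -> `|c|%N = `|c'|%N ->
  `|e|%N = `|e'|%N -> F4 d k a b c e = F4 d k a' b' c' e'.
Proof. by rewrite /F4 /rho => -> -> -> ->. Qed.
Lemma F3_perm d k a b c : F3 d k a b c = F3 d k a c b.
Proof. by rewrite /F3 [rho d a + _ + _]addrAC. Qed.

Lemma CG d k : (0 < d)%N ->
  S3 (fun x y z : 'I_d => Gf d k (a1 ((x, y), z)) + Gf d k (a2 ((x, y), z))
                   + Gf d k (a3 ((x, y), z)) + Gf d k (a4 ((x, y), z))) = NC1 d k.
Proof.
move=> hd.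
rewrite !S3D.
set W := \sum_(x < d) \sum_(z < d) Gf d k ((x : nat).+1%:Z - (z : nat).+1%:Z).
have e2 : S3 (fun x y z : 'I_d => Gf d k (a2 ((x, y), z))) = d%:R * W :=
  S3_noy (fun x z => Gf d k ((x : nat).+1%:Z - (z : nat).+1%:Z)).
have e4 : S3 (fun x y z : 'I_d => Gf d k (a4 ((x, y), z))) = d%:R * W :=
  S3_nox (fun x z => Gf d k ((x : nat).+1%:Z - (z : nat).+1%:Z)).
have e1 : S3 (fun x y z : 'I_d => Gf d k (a1 ((x, y), z))) = S3 (fun x y z : 'I_d => Gf d k (a2 ((x, y), z))).
  rewrite S3_revz; apply: eq_S3 => x y z; apply: Gf_abs.
  rewrite /a1 /a2 /ci /cl /=; have := ltn_ord z; lia.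
have e3 : S3 (fun x y z : 'I_d => Gf d k (a3 ((x, y), z))) = S3 (fun x y z : 'I_d => Gf d k (a4 ((x, y), z))).
  rewrite S3_revz; apply: eq_S3 => x y z; apply: Gf_abs.
  rewrite /a3 /a4 /cj /cl /=; have := ltn_ord z; lia.
rewrite e1 e3 e2 e4.
pose h t := (1 - ((d - t)%N)%:R / (d ^ 3)%:R) ^+ k : rat.
have eW : W = \sum_(x < d) \sum_(z < d) h `|(x : nat)%:Z - (z : nat)%:Z|%N.
  apply: eq_bigr => x _; apply: eq_bigr => z _.
  rewrite /Gf /h rho_nat; last by have := ltn_ord x; have := ltn_ord z; lia.
  congr ((1 - (_ - _)%N%:R / _) ^+ _); lia.
rewrite eW absSum /NC1.
have hd0 : (d%:R : rat) != 0 by rewrite pnatr_eq0 -lt0n.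
have eh0 : h 0%N = (1 - 1 / (d ^ 2)%:R) ^+ k.
  rewrite /h subn0; congr (_ ^+ _); rewrite !natrX; field; exact: hd0.
have es : \sum_(1 <= s < d) (d - s)%:R * h s
    = \sum_(1 <= s < d) s%:R * (1 - s%:R / (d ^ 3)%:R) ^+ k.
  rewrite big_nat_rev; apply: eq_big_nat => s hs.
  rewrite /h (_ : (1 + d - s.+1)%N = (d - s)%N); last by lia.
  by rewrite (_ : (d - (d - s))%N = s); last by lia.
rewrite eh0 es; ring.
Qed.

Ltac abs_tac := rewrite /a1 /a2 /a3 /a4 /ci /cj /cl /pos1 /=; lia.

Lemma C4 d k :
  S3 (fun x y z : 'I_d => F4 d k (a1 ((x, y), z)) (a2 ((x, y), z)) (a3 ((x, y), z)) (a4 ((x, y), z)))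
  = NC4 d k.
Proof.
rewrite /NC4 /S3; apply: eq_bigr => x _; apply: eq_bigr => y _; apply: eq_bigr => z _.
apply: F4_abs; abs_tac.
Qed.

Lemma C3 d k :
  S3 (fun x y z : 'I_d => F3 d k (a1 ((x, y), z)) (a2 ((x, y), z)) (a3 ((x, y), z))
       + F3 d k (a1 ((x, y), z)) (a2 ((x, y), z)) (a4 ((x, y), z))
       + F3 d k (a1 ((x, y), z)) (a3 ((x, y), z)) (a4 ((x, y), z))
       + F3 d k (a2 ((x, y), z)) (a3 ((x, y), z)) (a4 ((x, y), z)))
  = NC3 d k.
Proof.
rewrite !S3D.
have e1 : S3 (fun x y z : 'I_d => F3 d k (a1 ((x, y), z)) (a2 ((x, y), z)) (a3 ((x, y), z)))
        = S3 (fun x y z : 'I_d => F3 d k (a1 ((x, y), z)) (a2 ((x, y), z)) (a4 ((x, y), z))).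
  rewrite S3_revy; apply: eq_S3 => x y z; apply: F3_abs; have := ltn_ord y; abs_tac.
have e3 : S3 (fun x y z : 'I_d => F3 d k (a1 ((x, y), z)) (a3 ((x, y), z)) (a4 ((x, y), z)))
        = S3 (fun x y z : 'I_d => F3 d k (a2 ((x, y), z)) (a3 ((x, y), z)) (a4 ((x, y), z))).
  rewrite S3_revx; apply: eq_S3 => x y z; apply: F3_abs; have := ltn_ord x; abs_tac.
rewrite e1 e3.
have -> : NC3 d k = 2 * (S3 (fun x y z : 'I_d => F3 d k (a1 ((x, y), z)) (a2 ((x, y), z)) (a4 ((x, y), z)))
   + S3 (fun x y z : 'I_d => F3 d k (a2 ((x, y), z)) (a3 ((x, y), z)) (a4 ((x, y), z)))).
  rewrite /NC3 -S3D /S3; congr (2 * _).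
  apply: eq_bigr => x _; apply: eq_bigr => y _; apply: eq_bigr => z _.
  congr (_ + _); first by apply: F3_abs; abs_tac.
  by rewrite F3_perm; apply: F3_abs; abs_tac.
ring.
Qed.

Lemma C2 d k :
  S3 (fun x y z : 'I_d => F2 d k (a1 ((x, y), z)) (a2 ((x, y), z))
       + F2 d k (a1 ((x, y), z)) (a3 ((x, y), z))
       + F2 d k (a1 ((x, y), z)) (a4 ((x, y), z))
       + F2 d k (a2 ((x, y), z)) (a3 ((x, y), z))
       + F2 d k (a2 ((x, y), z)) (a4 ((x, y), z))
       + F2 d k (a3 ((x, y), z)) (a4 ((x, y), z)))
  = NC2 d k.
Proof.
rewrite !S3D.
set W := \sum_(x < d) \sum_(z < d)
   F2 d k ((x : nat).+1%:Z + (z : nat).+1%:Z - 1 - d%:Z) ((x : nat).+1%:Z - (z : nat).+1%:Z).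
have e12 : S3 (fun x y z : 'I_d => F2 d k (a1 ((x, y), z)) (a2 ((x, y), z))) = d%:R * W :=
  S3_noy (fun x z => F2 d k ((x : nat).+1%:Z + (z : nat).+1%:Z - 1 - d%:Z) ((x : nat).+1%:Z - (z : nat).+1%:Z)).
have e34 : S3 (fun x y z : 'I_d => F2 d k (a3 ((x, y), z)) (a4 ((x, y), z))) = d%:R * W :=
  S3_nox (fun x z => F2 d k ((x : nat).+1%:Z + (z : nat).+1%:Z - 1 - d%:Z) ((x : nat).+1%:Z - (z : nat).+1%:Z)).
have e13 : S3 (fun x y z : 'I_d => F2 d k (a1 ((x, y), z)) (a3 ((x, y), z)))
         = S3 (fun x y z : 'I_d => F2 d k (a2 ((x, y), z)) (a4 ((x, y), z))).
  rewrite S3_revz; apply: eq_S3 => x y z; apply: F2_abs; have := ltn_ord z; abs_tac.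
have e14 : S3 (fun x y z : 'I_d => F2 d k (a1 ((x, y), z)) (a4 ((x, y), z)))
         = S3 (fun x y z : 'I_d => F2 d k (a2 ((x, y), z)) (a4 ((x, y), z))).
  rewrite S3_revx; apply: eq_S3 => x y z; apply: F2_abs; have := ltn_ord x; abs_tac.
have e23 : S3 (fun x y z : 'I_d => F2 d k (a2 ((x, y), z)) (a3 ((x, y), z)))
         = S3 (fun x y z : 'I_d => F2 d k (a2 ((x, y), z)) (a4 ((x, y), z))).
  rewrite S3_revy; apply: eq_S3 => x y z; apply: F2_abs; have := ltn_ord y; abs_tac.
rewrite e12 e34 e13 e14 e23.
have -> : NC2 d k = 2 * d%:R * W
   + 4 * S3 (fun x y z : 'I_d => F2 d k (a2 ((x, y), z)) (a4 ((x, y), z))).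
  rewrite /NC2; congr (_ * _ + 4 * _).
    apply: eq_bigr => x _; apply: eq_bigr => z _; apply: F2_abs; abs_tac.
  rewrite /S3; apply: eq_bigr => x _; apply: eq_bigr => y _; apply: eq_bigr => z _.
  apply: F2_abs; abs_tac.
ring.
Qed.

Lemma C0 d : S3 (fun x y z : 'I_d => (1 : rat)) = (d ^ 3)%:R.
Proof.
rewrite /S3 (eq_bigr (fun _ => d%:R * d%:R)); last first.
  move=> x _; rewrite (eq_bigr (fun _ => d%:R)); last first.
    by move=> y _; rewrite sumr_const card_ord.
  by rewrite sumr_const card_ord mulr_natl.
by rewrite sumr_const card_ord -mulr_natl natrX; ring.
Qed.

Lemma S3_comb d (f0 f1 f2 f3 f4 : 'I_d -> 'I_d -> 'I_d -> rat) :
  S3 (fun x y z => f0 x y z - f1 x y z + f2 x y z - f3 x y z + f4 x y z)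
  = S3 f0 - S3 f1 + S3 f2 - S3 f3 + S3 f4.
Proof.
rewrite S3D S3D S3N S3D S3D S3N //.
Qed.

Unset Implicit Arguments.
Theorem proposition4p2 (d k : nat) (hd : (2 <= d)%N) :
  NC d k = (d ^ 3)%:R - NC1 d k + NC2 d k - NC3 d k + NC4 d k.
Proof.
have hd0 : (0 < d)%N by lia.
rewrite NC_T // big_cell.
have -> : \sum_(x < d) \sum_(y < d) \sum_(z < d) @Tc d k ((x, y), z)
   = S3 (fun x y z : 'I_d => @Tc d k ((x, y), z)) by [].
rewrite /Tc S3_comb.
by rewrite C0 (CG k hd0) C2 C3 C4.
Qed.
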